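(* Let $C,D$ be sets and let $\bot:=CD\mathcal y$ be the $(C\mathcal y,D\mathcal y)$-bicomodule corresponding to the terminal span $C\leftarrow C\times D\to D$. The operation $m\mapsto m^\vee:=[m,\bot]_{C\mathcal y,D\mathcal y}$ restricts to mutually inverse equivalences between the category of conjunctive $(C\mathcal y,D\mathcal y)$-bicomodules and the opposite of the category of linear $(C\mathcal y,D\mathcal y)$-bicomodules. Explicitly, for a span $C\leftarrow M\to D$ with fibers $M_a$ over $a\in C$ (each a set over $D$), $$\Big(\sum_{a\in C}M_a\mathcal y\Big)^\vee\cong\sum_{a\in C}\mathcal y^{M_a}\qquad\text{and}\qquad\Big(\sum_{a\in C}\mathcal y^{M_a}\Big)^\vee\cong\sum_{a\in C}M_a\mathcal y.$$
   Context: Bicomodules between discrete categories $C\mathcal y,D\mathcal y$ (comonoids in $(\mathbf{Poly},\mathcal y,\triangleleft)$ with linear carrier) are polynomials $m$ with compatible coactions; a linear one $M\mathcal y$ is a span $C\leftarrow M\to D$ (corresponding prafunctor $\Sigma\Delta$), a conjunctive one has exactly one position over each $a\in C$, i.e. is $\sum_{a\in C}\mathcal y^{m[a]}$ with each $m[a]$ a set over $D$ (corresponding prafunctor $\Pi\Delta$). For such bicomodules $q,r$, the local internal hom is $[q,r]_{C\mathcal y,D\mathcal y}:=\sum_{a\in C}\sum_{\varphi\in\mathbf{Set}[D](q_a,r_a)}\mathcal y^{\sum_{j\in q_a(1)}r[\varphi(j)]}$, where $q_a$ is the summand over $a$, $\mathbf{Set}[D](q_a,r_a)$ is the set of natural transformations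 between the associated functors $D\text{-}\mathbf{Set}\to\mathbf{Set}$, $X\mapsto\sum_{j\in q_a(1)}D\text{-}\mathbf{Set}(q[j],X)$, and $\varphi(j)$ is the image position. It is contravariant in $q$. *)

(* Defs.v *)
Set Implicit Arguments.

Section Bicomod.
Variables C D : Type.

(* A (Cy,Dy)-bicomodule between discrete categories: a polynomial
   m = sum_{i in pos} y^{dir i}, whose positions lie over C (left coaction)
   and whose directions lie over D (right coaction). *)
Record bicomod := Bicomod {
  pos : Type;
  base : pos -> C;
  dir : pos -> Type;
  dlab : forall i, dir i -> D }.

Record hom (m n : bicomod) := Hom {
  on_pos : pos m -> pos n;
  on_base : forall i, base n (on_pos i) = base m i;
  on_dir : forall i, dir n (on_pos i) -> dir m i;
  on_lab : forall i e, dlab m i (on_dir i e) = dlab n (on_pos i) e }.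

Definition hom_eq (m n : bicomod) (f g : hom m n) : Prop :=
  exists p : forall i, on_pos f i = on_pos g i,
    forall i (e : dir n (on_pos f i)),
      on_dir f i e = on_dir g i (eq_rect _ (dir n) e _ (p i)).

Definition idh (m : bicomod) : hom m m :=
  @Hom m m (fun i => i) (fun i => eq_refl) (fun i e => e) (fun i e => eq_refl).

Definition comp (m n p : bicomod) (g : hom n p) (f : hom m n) : hom m p :=
  @Hom m p (fun i => on_pos g (on_pos f i))
    (fun i => eq_trans (on_base g (on_pos f i)) (on_base f i))
    (fun i e => on_dir f i (on_dir g (on_pos f i) e))
    (fun i e => eq_trans (on_lab f i _) (on_lab g (on_pos f i) e)).

Definition iso (m n : bicomod) : Prop :=
  exists (f : hom m n) (g : hom n m),
    hom_eq (comp g f) (idh m) /\ hom_eq (comp f g) (idh n).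

(* linear: every position has exactly one direction (m = My, a span C <- M -> D) *)
Definition linear (m : bicomod) : Prop :=
  forall i, exists e : dir m i, forall e', e' = e.

Definition conjunctive (m : bicomod) : Prop :=
  forall a, exists i, base m i = a /\ forall i', base m i' = a -> i' = i.

Definition fib (m : bicomod) (a : C) := {i : pos m | base m i = a}.

Definition dmap (m n : bicomod) (i : pos m) (k : pos n) :=
  {g : dir n k -> dir m i | forall e, dlab m i (g e) = dlab n k e}.

(* natural transformations q_a => r_a between the functors
   X |-> sum_{j in q_a(1)} D-Set(q[j], X), in their Yoneda (lens) form:
   an image position phi(j) over a and a D-map r[phi(j)] -> q[j]. *)
Definition nat_tr (q r : bicomod) (a : C) :=
  forall j : fib q a, {k : fib r a & dmap q r (proj1_sig j) (proj1_sig k)}.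

Definition ihom (q r : bicomod) : bicomod :=
  @Bicomod {a : C & nat_tr q r a} (fun p => projT1 p)
    (fun p => {j : fib q (projT1 p) & dir r (proj1_sig (projT1 (projT2 p j)))})
    (fun p e => dlab r _ (projT2 e)).

Definition ihom_map (q q' r : bicomod) (f : hom q q') : hom (ihom q' r) (ihom q r).
Proof.
refine (@Hom (ihom q' r) (ihom q r)
  (fun p => existT (fun a => nat_tr q r a) (projT1 p)
     (fun j =>
        let j' := exist (fun i => base q' i = projT1 p) (on_pos f (proj1_sig j))
                    (eq_trans (on_base f (proj1_sig j)) (proj2_sig j)) in
        existT _ (projT1 (projT2 p j'))
          (exist _ (fun e => on_dir f _ (proj1_sig (projT2 (projT2 p j')) e)) _)))
  (fun p => eq_refl)
  (fun p e => existT _ (exist (fun i => base q' i = projT1 p)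
                          (on_pos f (proj1_sig (projT1 e)))
                          (eq_trans (on_base f (proj1_sig (projT1 e)))
                                    (proj2_sig (projT1 e)))) (projT2 e))
  (fun p e => eq_refl)).
intro e. simpl. rewrite on_lab. apply (proj2_sig (projT2 (projT2 p j'))).
Defined.

Definition bot : bicomod :=
  @Bicomod (C * D) (fun k => fst k) (fun _ => unit) (fun k _ => snd k).

Definition dual (m : bicomod) : bicomod := ihom m bot.
Definition dualmap (m n : bicomod) (f : hom m n) : hom (dual n) (dual m) :=
  ihom_map bot f.

Definition lin_of (M : Type) (s : M -> C) (t : M -> D) : bicomod :=
  @Bicomod M s (fun _ => unit) (fun x _ => t x).

Definition conj_of (M : Type) (s : M -> C) (t : M -> D) : bicomod :=
  @Bicomod C (fun a => a) (fun a => {x : M | s x = a}) (fun a x => t (proj1_sig x)).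

End Bicomod.

(* Main.v *)
Require Import Defs.
From Stdlib Require Import ProofIrrelevance FunctionalExtensionality Classical IndefiniteDescription.

Definition pick {C D : Type} {q : bicomod C D} {a : C} (phi : nat_tr q (bot C D) a)
  (j : fib q a) : dir q (proj1_sig j) := proj1_sig (projT2 (phi j)) tt.

Definition mk {C D : Type} (q : bicomod C D) (a : C)
  (F : forall j : fib q a, dir q (proj1_sig j)) : nat_tr q (bot C D) a :=
  fun j => existT _ (exist (fun k : C * D => fst k = a) (a, dlab q _ (F j)) eq_refl)
     (exist _ (fun _ : unit => F j) (fun _ => eq_refl)).

Lemma nat_tr_ext {C D : Type} (q : bicomod C D) (a : C) (phi phi' : nat_tr q (bot C D) a) :
  (forall j, pick phi j = pick phi' j) -> phi = phi'.
Proof.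
intro H. apply functional_extensionality_dep. intro j. specialize (H j).
unfold pick in H.
destruct (phi j) as [[[c d] pc] [g Hg]].
destruct (phi' j) as [[[c' d'] pc'] [g' Hg']]. simpl in *.
subst c c'. 
assert (Eg : g = g'). { apply functional_extensionality. intros []. exact H. }
subst g'.
pose proof (Hg tt) as E1. pose proof (Hg' tt) as E2. simpl in E1, E2.
subst d d'.
assert (Hg = Hg') by apply proof_irrelevance. subst Hg'.
reflexivity.
Qed.

Lemma lab_pick {C D : Type} (q : bicomod C D) (p : pos (dual q)) (e : dir (dual q) p) :
  dlab (dual q) p e = dlab q (proj1_sig (projT1 e)) (pick (projT2 p) (projT1 e)).
Proof.
destruct p as [a phi]. destruct e as [j u]. simpl. unfold pick.
destruct (phi j) as [k [g Hg]]. simpl. symmetry. apply (Hg tt).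
Qed.

Lemma pick_transport {C D : Type} (q : bicomod C D) (a : C) (phi : nat_tr q (bot C D) a)
  (j j' : fib q a) (E : proj1_sig j = proj1_sig j') :
  pick phi j' = eq_rect _ (dir q) (pick phi j) _ E.
Proof.
destruct j as [i pi], j' as [i' pi']. simpl in E. subst i'. simpl.
assert (pi = pi') by apply proof_irrelevance. subst. reflexivity.
Qed.

Lemma dual_pos_eq {C D : Type} (X : bicomod C D) (a a' : C) (E : a = a')
  (phi : nat_tr X (bot C D) a) (phi' : nat_tr X (bot C D) a') :
  (forall j : fib X a', pick phi (exist _ (proj1_sig j) (eq_trans (proj2_sig j) (eq_sym E)))
      = pick phi' j) ->
  existT (fun a => nat_tr X (bot C D) a) a phi = existT _ a' phi'.
Proof.
destruct E. intro H. f_equal. apply nat_tr_ext. intro j. rewrite <- H.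
destruct j as [i pi]. reflexivity.
Qed.

Lemma dualdir_rect {C D : Type} (X : bicomod C D) (x y : pos (dual X)) (q : x = y)
  (e : dir (dual X) x) :
  eq_rect x (dir (dual X)) e y q =
  existT (fun j : fib X (projT1 y) => unit)
    (exist _ (proj1_sig (projT1 e)) (eq_trans (proj2_sig (projT1 e)) (f_equal (@projT1 _ _) q)))
    (projT2 e).
Proof.
destruct q. destruct e as [[j pj] u]. reflexivity.
Qed.

Lemma hom_eq_dual {C D : Type} (m X : bicomod C D) (f g : hom m (dual X))
  (E : forall i, projT1 (on_pos f i) = projT1 (on_pos g i)) :
  (forall i, on_pos f i = on_pos g i) ->
  (forall i (e : {j : fib X (projT1 (on_pos f i)) & unit}),
      on_dir f i e = on_dir g i (existT (fun j : fib X (projT1 (on_pos g i)) => unit)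
          (exist _ (proj1_sig (projT1 e)) (eq_trans (proj2_sig (projT1 e)) (E i))) (projT2 e))) ->
  hom_eq f g.
Proof.
intros P H. exists P. intros i e. rewrite dualdir_rect. rewrite H.
f_equal. f_equal. f_equal. apply proof_irrelevance.
Qed.

Lemma part1 {C D : Type} (m : bicomod C D) : conjunctive m -> linear (dual m).
Proof.
intros Hc [a phi]. destruct (Hc a) as [i [Hi Hu]].
exists (existT (fun j : fib m a => unit) (exist _ i Hi) tt).
intros [[i' pi'] u]. destruct u. pose proof (Hu i' pi'). subst i'.
assert (pi' = Hi) by apply proof_irrelevance. subst. reflexivity.
Qed.

Lemma part2 {C D : Type} (m : bicomod C D) : linear m -> conjunctive (dual m).
Proof.
intros Hl a.
pose (F := fun j : fib m a => proj1_sig (constructive_indefinite_description _ (Hl (proj1_sig j)))).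
exists (existT (fun a => nat_tr m (bot C D) a) a (mk m a F)). split. reflexivity.
intros [a' phi'] H. simpl in H. subst a'. f_equal. apply nat_tr_ext. intro j.
unfold F, mk, pick; simpl.
destruct (constructive_indefinite_description _ (Hl (proj1_sig j))) as [e He]. simpl. apply He.
Qed.

Ltac pi_exist := repeat match goal with |- context [exist ?P ?x ?p1] =>
  match goal with |- context [exist _ x ?p2] =>
    tryif constr_eq p1 p2 then fail else rewrite (proof_irrelevance _ p1 p2) end end.


Lemma part3 {C D : Type} (m : bicomod C D) : hom_eq (dualmap (idh m)) (idh (dual m)).
Proof.
apply (@hom_eq_dual C D (dual m) m (dualmap (idh m)) (idh (dual m)) (fun i => eq_refl)).
- intros [a phi]. simpl; apply (dual_pos_eq m a a eq_refl). intros [i pi]. cbn.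
  pi_exist. reflexivity.
- intros [a phi] [[i pi] u]. cbn. f_equal. f_equal. apply proof_irrelevance.
Qed.

Lemma part4 {C D : Type} (m n p : bicomod C D) (f : hom m n) (g : hom n p) :
  hom_eq (dualmap (comp g f)) (comp (dualmap f) (dualmap g)).
Proof.
apply (@hom_eq_dual C D (dual p) m (dualmap (comp g f)) (comp (dualmap f) (dualmap g)) (fun i => eq_refl)).
- intros [a phi]. simpl; apply (dual_pos_eq m a a eq_refl). intros [i pi]. cbn.
  pi_exist. reflexivity.
- intros [a phi] [[i pi] u]. cbn. f_equal. f_equal. apply proof_irrelevance.
Qed.


Definition eta_pos {C D : Type} (m : bicomod C D) (i : pos m) : pos (dual (dual m)) :=
  existT (fun a => nat_tr (dual m) (bot C D) a) (base m i)
    (mk (dual m) (base m i) (fun J => existT (fun j : fib m (projT1 (proj1_sig J)) => unit)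
        (exist _ i (eq_sym (proj2_sig J))) tt)).

Definition eta {C D : Type} (m : bicomod C D) : hom m (dual (dual m)).
Proof.
refine (@Hom _ _ m (dual (dual m)) (eta_pos m) (fun i => eq_refl)
  (fun i e => pick (projT2 (proj1_sig (projT1 e))) (exist _ i (eq_sym (proj2_sig (projT1 e))))) _).
intros i e. rewrite (lab_pick (dual m)). rewrite (lab_pick m). reflexivity.
Defined.

Definition J_of {C D : Type} (m : bicomod C D) (a : C) (phi : nat_tr m (bot C D) a) : fib (dual m) a :=
  exist (fun P : pos (dual m) => projT1 P = a) (existT (fun a => nat_tr m (bot C D) a) a phi) eq_refl.

Definition good {C D : Type} (m : bicomod C D) (a : C) (phi2 : nat_tr (dual m) (bot C D) a)
  (i : fib m a) : Prop :=
  forall e : dir m (proj1_sig i), exists phi : nat_tr m (bot C D) a,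
    pick phi i = e /\ projT1 (P := fun j : fib m a => unit) (pick phi2 (J_of m a phi)) = i.

Lemma good_exists {C D : Type} (m : bicomod C D) (a : C) (phi2 : nat_tr (dual m) (bot C D) a) :
  exists i, good m a phi2 i.
Proof.
apply NNPP. intro H.
assert (H' : forall i : fib m a, exists e : dir m (proj1_sig i), forall phi : nat_tr m (bot C D) a,
   pick phi i = e -> projT1 (P := fun j : fib m a => unit) (pick phi2 (J_of m a phi)) <> i).
{ intro i. apply NNPP; intro H2. apply H. exists i. intro e. apply NNPP; intro H3. apply H2.
  exists e. intros phi Hp Hq. apply H3. exists phi. split; assumption. }
pose (F := fun i => proj1_sig (constructive_indefinite_description _ (H' i))).
pose (phi := mk m a F).
apply (proj2_sig (constructive_indefinite_description _ (H' (projT1 (P := fun j : fib m a => unit) (pick phi2 (J_of m a phi))))) phi eq_refl eq_refl).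
Qed.

Definition gi {C D : Type} (m : bicomod C D) (P2 : pos (dual (dual m))) : fib m (projT1 P2) :=
  proj1_sig (constructive_indefinite_description _ (good_exists m (projT1 P2) (projT2 P2))).
Definition gs {C D : Type} (m : bicomod C D) (P2 : pos (dual (dual m))) : good m _ (projT2 P2) (gi m P2) :=
  proj2_sig (constructive_indefinite_description _ (good_exists m (projT1 P2) (projT2 P2))).
Definition gphi {C D : Type} (m : bicomod C D) (P2 : pos (dual (dual m))) (e : dir m (proj1_sig (gi m P2))) :
  nat_tr m (bot C D) (projT1 P2) :=
  proj1_sig (constructive_indefinite_description _ (gs m P2 e)).
Definition gphi_spec {C D : Type} (m : bicomod C D) (P2 : pos (dual (dual m))) (e : dir m (proj1_sig (gi m P2))) :=
  proj2_sig (constructive_indefinite_description _ (gs m P2 e)).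

Definition eps {C D : Type} (m : bicomod C D) : hom (dual (dual m)) m.
Proof.
refine (@Hom _ _ (dual (dual m)) m (fun P2 => proj1_sig (gi m P2)) (fun P2 => proj2_sig (gi m P2))
  (fun P2 e => existT (fun J : fib (dual m) (projT1 P2) => unit) (J_of m _ (gphi m P2 e)) tt) _).
intros P2 e. rewrite (lab_pick (dual m)). rewrite (lab_pick m). simpl.
destruct (gphi_spec m P2 e) as [H1 H2].
change (proj1_sig (constructive_indefinite_description _ (gs m P2 e))) with (gphi m P2 e) in H1, H2.
rewrite H2. rewrite H1. reflexivity.
Defined.

Lemma eta_nat {C D : Type} (m n : bicomod C D) (f : hom m n) :
  hom_eq (comp (dualmap (dualmap f)) (eta m)) (comp (eta n) f).
Proof.
apply (@hom_eq_dual C D m (dual n) (comp (dualmap (dualmap f)) (eta m)) (comp (eta n) f)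
   (fun i => eq_sym (on_base f i))).
- intro i. simpl. apply (dual_pos_eq (dual n) _ _ (eq_sym (on_base f i))).
  intros [J pJ]. cbn. pi_exist. reflexivity.
- intros i [[J pJ] u]. cbn. unfold pick. pi_exist. reflexivity.
Qed.

Lemma eps_eta {C D : Type} (m : bicomod C D) (p : forall i, proj1_sig (gi m (eta_pos m i)) = i) :
  hom_eq (comp (eps m) (eta m)) (idh m).
Proof.
exists p. intros i e. simpl.
destruct (gphi_spec m (eta_pos m i) e) as [H1 H2].
change (proj1_sig (constructive_indefinite_description _ (gs m (eta_pos m i) e))) with (gphi m (eta_pos m i) e) in H1, H2.
etransitivity; [apply (pick_transport m (base m i) _ (gi m (eta_pos m i)) (exist (fun i0 => base m i0 = base m i) i eq_refl) (p i))|].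
apply (f_equal (fun x => eq_rect _ (dir m) x i (p i)) H1).
Qed.

Lemma gi_eta_conj {C D : Type} (m : bicomod C D) (Hc : conjunctive m) i : proj1_sig (gi m (eta_pos m i)) = i.
Proof.
destruct (Hc (base m i)) as [i0 [_ Hu]].
transitivity i0; [apply Hu; exact (proj2_sig (gi m (eta_pos m i)))| symmetry; apply Hu; reflexivity].
Qed.

Lemma gi_eta_lin {C D : Type} (m : bicomod C D) (Hl : linear m) i : proj1_sig (gi m (eta_pos m i)) = i.
Proof.
destruct (Hl (proj1_sig (gi m (eta_pos m i)))) as [e _].
destruct (gs m (eta_pos m i) e) as [phi [_ H]].
rewrite <- H. reflexivity.
Qed.

Lemma sig_unit_eq {C D : Type} (m : bicomod C D) (c : C) (x : {j : fib m c & unit}) (i : pos m)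
  (p : base m i = c) : proj1_sig (projT1 x) = i -> existT (fun _ : fib m c => unit) (exist _ i p) tt = x.
Proof.
destruct x as [[i' p'] []]. simpl. intro; subst. f_equal. f_equal. apply proof_irrelevance.
Qed.

Lemma lin_J {C D : Type} (m : bicomod C D) (Hl : linear m) (a : C) (J J' : fib (dual m) a) : J = J'.
Proof.
destruct J as [[a1 phi1] p1], J' as [[a2 phi2] p2]. simpl in p1, p2. subst.
assert (phi1 = phi2) as ->.
{ apply nat_tr_ext. intro j. destruct (Hl (proj1_sig j)) as [e He].
  rewrite (He (pick phi1 j)), (He (pick phi2 j)). reflexivity. }
reflexivity.
Qed.

Lemma fib_eq_intro {C D : Type} (m : bicomod C D) (a : C) (J J' : fib m a) :
  proj1_sig J = proj1_sig J' -> J = J'.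
Proof.
destruct J as [j p], J' as [j' p']. simpl. intro; subst. f_equal. apply proof_irrelevance.
Qed.

Lemma eta_eps {C D : Type} (m : bicomod C D) (Hcl : conjunctive m \/ linear m) :
  hom_eq (comp (eta m) (eps m)) (idh (dual (dual m))).
Proof.
apply (@hom_eq_dual C D (dual (dual m)) (dual m) (comp (eta m) (eps m)) (idh _)
   (fun P2 => proj2_sig (gi m P2))).
- intros [a phi2]. simpl. apply (dual_pos_eq (dual m) _ _ (proj2_sig (gi m (existT _ a phi2)))).
  intros [J pJ]. cbn. apply sig_unit_eq.
  destruct Hcl as [Hc | Hl].
  + destruct (Hc a) as [i0 [_ Hu]].
    transitivity i0; [apply Hu| symmetry; apply Hu].
    * match goal with |- base m (proj1_sig (projT1 ?x)) = _ => exact (eq_trans (proj2_sig (projT1 x)) pJ) end.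
    * exact (proj2_sig (gi m (existT _ a phi2))).
  + set (P2 := existT (fun a0 : C => nat_tr (dual m) (bot C D) a0) a phi2).
    destruct (Hl (proj1_sig (gi m P2))) as [e _].
    destruct (gphi_spec m P2 e) as [H1 H2].
    change (proj1_sig (constructive_indefinite_description _ (gs m P2 e))) with (gphi m P2 e) in H1, H2.
    pose proof (f_equal (fun JJ => proj1_sig (projT1 (pick phi2 JJ)))
       (lin_J m Hl a (exist _ J pJ) (J_of m a (gphi m P2 e)))) as HH.
    etransitivity; [exact HH|]. exact (f_equal (@proj1_sig _ _) H2).
- intros P2 [J u]. cbn. destruct u. f_equal.
  destruct Hcl as [Hc | Hl]; [| apply lin_J; exact Hl].
  apply fib_eq_intro. simpl.
  destruct J as [[a2 phi] pJ]. simpl in *.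
  apply (dual_pos_eq m _ _ (eq_sym (eq_trans pJ (proj2_sig (gi m P2))))).
  intros [i pi]. simpl.
  assert (Hi : i = proj1_sig (gi m P2)).
  { destruct (Hc a2) as [i0 [_ Hu]]. transitivity i0; [apply Hu; exact pi| symmetry; apply Hu; exact (eq_sym pJ)]. }
  subst i.
  set (x := pick phi _).
  destruct (gphi_spec m P2 x) as [H1 H2].
  change (proj1_sig (constructive_indefinite_description _ (gs m P2 x))) with (gphi m P2 x) in H1, H2.
  match goal with |- pick _ ?jj = _ =>
    etransitivity; [apply (pick_transport m _ _ (gi m P2) jj eq_refl)|] end. simpl.
  rewrite H1. unfold x. pi_exist. reflexivity.
Qed.


Lemma sig_pi (A : Type) (P : A -> Prop) (x y : sig P) : proj1_sig x = proj1_sig y -> x = y.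
Proof. destruct x, y. simpl. intro; subst. f_equal. apply proof_irrelevance. Qed.


Definition lf {C D M : Type} (s : M -> C) (t : M -> D) : hom (dual (lin_of s t)) (conj_of s t).
Proof.
refine (@Hom _ _ (dual (lin_of s t)) (conj_of s t) (fun p => projT1 p) (fun p => eq_refl)
  (fun p x => existT (fun j : fib (lin_of s t) (projT1 p) => unit) x tt) _).
intros p x. rewrite (lab_pick (lin_of s t)). reflexivity.
Defined.

Definition lg {C D M : Type} (s : M -> C) (t : M -> D) : hom (conj_of s t) (dual (lin_of s t)).
Proof.
refine (@Hom _ _ (conj_of s t) (dual (lin_of s t))
  (fun a => existT (fun a => nat_tr (lin_of s t) (bot C D) a) a (mk (lin_of s t) a (fun _ => tt)))
  (fun a => eq_refl) (fun a e => projT1 e) _).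
intros a e. rewrite (lab_pick (lin_of s t)). reflexivity.
Defined.

Lemma iso1 {C D M : Type} (s : M -> C) (t : M -> D) : iso (dual (lin_of s t)) (conj_of s t).
Proof.
exists (lf s t), (lg s t). split.
- apply (@hom_eq_dual C D _ (lin_of s t) (comp (lg s t) (lf s t)) (idh _) (fun i => eq_refl)).
  + intros [a phi]. simpl. apply (dual_pos_eq (lin_of s t) a a eq_refl).
    intros j. destruct (pick phi j). destruct (pick (mk (lin_of s t) a (fun _ => tt)) _). reflexivity.
  + intros [a phi] [[x px] []]. cbn. pi_exist. reflexivity.
- exists (fun a => eq_refl). intros a e. reflexivity.
Qed.

Definition cf {C D M : Type} (s : M -> C) (t : M -> D) : hom (dual (conj_of s t)) (lin_of s t).
Proof.
refine (@Hom _ _ (dual (conj_of s t)) (lin_of s t)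
  (fun p => proj1_sig (pick (projT2 p) (exist (fun c : C => c = projT1 p) (projT1 p) eq_refl)))
  (fun p => proj2_sig (pick (projT2 p) (exist (fun c : C => c = projT1 p) (projT1 p) eq_refl)))
  (fun p u => existT (fun j : fib (conj_of s t) (projT1 p) => unit)
       (exist (fun c : C => c = projT1 p) (projT1 p) eq_refl) tt) _).
intros p u. rewrite (lab_pick (conj_of s t)). reflexivity.
Defined.

Definition cg {C D M : Type} (s : M -> C) (t : M -> D) : hom (lin_of s t) (dual (conj_of s t)).
Proof.
refine (@Hom _ _ (lin_of s t) (dual (conj_of s t))
  (fun x => existT (fun a => nat_tr (conj_of s t) (bot C D) a) (s x)
     (mk (conj_of s t) (s x) (fun j => exist (fun y => s y = proj1_sig j) x (eq_sym (proj2_sig j)))))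
  (fun x => eq_refl) (fun x e => tt) _).
intros x e. rewrite (lab_pick (conj_of s t)). reflexivity.
Defined.

Lemma iso2 {C D M : Type} (s : M -> C) (t : M -> D) : iso (dual (conj_of s t)) (lin_of s t).
Proof.
exists (cf s t), (cg s t). split.
- apply (@hom_eq_dual C D _ (conj_of s t) (comp (cg s t) (cf s t)) (idh _)
     (fun p => proj2_sig (pick (projT2 p) (exist (fun c : C => c = projT1 p) (projT1 p) eq_refl)))).
  + intros [a phi]. simpl. apply (dual_pos_eq (conj_of s t) _ _ (proj2_sig (pick phi (exist (fun c : C => c = a) a eq_refl)))).
    intros [c pc]. simpl in pc. subst c. apply sig_pi. cbn. reflexivity.
  + intros [a phi] [[c pc] []]. cbn. f_equal. apply sig_pi. simpl. simpl in pc. rewrite pc. symmetry. match goal with |- s (proj1_sig ?y) = _ => exact (proj2_sig y) end.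
- exists (fun x => eq_refl). intros x []. reflexivity.
Qed.


Theorem theorem2p50 (C D : Type) :
  (* m |-> m^vee sends conjunctive to linear and linear to conjunctive *)
  (forall m : bicomod C D, conjunctive m -> linear (dual m)) /\
  (forall m : bicomod C D, linear m -> conjunctive (dual m)) /\
  (* m |-> m^vee is a (contravariant) functor *)
  (forall m : bicomod C D, hom_eq (dualmap (idh m)) (idh (dual m))) /\
  (forall (m n p : bicomod C D) (f : hom m n) (g : hom n p),
      hom_eq (dualmap (comp g f)) (comp (dualmap f) (dualmap g))) /\
  (* the two restrictions are mutually inverse: natural isomorphisms
     m ~= m^vee^vee on conjunctive and on linear bicomodules *)
  (exists (eta : forall m : bicomod C D, hom m (dual (dual m)))
          (eps : forall m : bicomod C D, hom (dual (dual m)) m),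
      (forall m : bicomod C D, conjunctive m \/ linear m ->
          hom_eq (comp (eps m) (eta m)) (idh m) /\
          hom_eq (comp (eta m) (eps m)) (idh (dual (dual m)))) /\
      (forall (m n : bicomod C D) (f : hom m n),
          (conjunctive m /\ conjunctive n) \/ (linear m /\ linear n) ->
          hom_eq (comp (dualmap (dualmap f)) (eta m)) (comp (eta n) f))) /\
  (* explicit formulas *)
  (forall (M : Type) (s : M -> C) (t : M -> D),
      iso (dual (lin_of s t)) (conj_of s t) /\
      iso (dual (conj_of s t)) (lin_of s t)).

Proof.
split; [intros m; apply part1|].
split; [intros m; apply part2|].
split; [intros m; apply part3|].
split; [intros m n p f g; apply part4|].
split.
- exists eta, eps. split.
  + intros m H. split.
    * apply eps_eta. intro i. destruct H as [Hc|Hl]; [apply gi_eta_conj; exact Hc| apply gi_eta_lin; exact Hl].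
    * apply eta_eps. exact H.
  + intros m n f _. apply eta_nat.
- intros M s t. split; [apply iso1 | apply iso2].
Qed.
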